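(* Let $\tau^-\colon\underline{\mathscr{C}}\to\underline{\mathscr{C}}^-$ be a right adjoint of the inclusion functor $\underline{\mathscr{C}}^-\hookrightarrow\underline{\mathscr{C}}$. For $C\in\mathscr{C}$, let $K_C$ be obtained as follows: choose a distinguished triangle $S[-1]\to C\overset{a}{\to}T\to S$ with $S\in\mathcal{S},T\in\mathcal{T}$; choose a distinguished triangle $U\to T\overset{b}{\to}V[1]\to U[1]$ with $U\in\mathcal{U},V\in\mathcal{V}$; and choose a distinguished triangle $V\to K_C\overset{k_C}{\to}C\overset{b\circ a}{\to}V[1]$. Then the following are equivalent: (1) $\tau^-(C)=0$; (2) $K_C\in\mathcal{W}$; (3) $C\in\mathcal{T}$.
   Context: $\mathscr{C}$ is a triangulated category with shift $[1]$; subcategories are full, additive, closed under isomorphisms and direct summands. $\mathrm{Ext}^1(X,Y)=\mathscr{C}(X,Y[1])$. $\mathcal{M}\ast\mathcal{N}$ is the full subcategory of objects $C$ admitting a distinguished triangle $M\to C\to N\to M[1]$ with $M\in\mathcal{M}$, $N\in\mathcal{N}$. A cotorsion pair $(\mathcal{U},\mathcal{V})$: $\mathrm{Ext}^1(\mathcal{U},\mathcal{V})=0$ and $\mathscr{C}=\mathcal{U}\ast\mathcal{V}[1]$. Fix a twin cotorsion pair, i.e. cotorsion pairs $(\mathcal{S},\mathcal{T}),(\mathcal{U},\mathcal{V})$ with $\mathrm{Ext}^1(\mathcal{S},\mathcal{V})=0$. Put $\mathcal{W}=\mathcal{T}\cap\mathcal{U}$, $\mathscr{C}^-=\mathcal{S}[-1]\ast\mathcal{W}$.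 $\underline{\mathscr{C}}$ and $\underline{\mathscr{C}}^-$ are the ideal quotients of $\mathscr{C}$ and $\mathscr{C}^-$ by morphisms factoring through objects of $\mathcal{W}$ (such a right adjoint $\tau^-$ exists). *)

(* Defs.v *)
From HB Require Import structures.
From mathcomp Require Import all_boot all_algebra.

Set Implicit Arguments.
Unset Strict Implicit.
Unset Printing Implicit Defensive.
Import GRing.Theory.
Local Open Scope ring_scope.

Record PreaddCat := MkPreaddCat {
  Obj :> Type;
  Hom : Obj -> Obj -> zmodType;
  idm : forall X : Obj, Hom X X;
  compo : forall X Y Z : Obj, Hom Y Z -> Hom X Y -> Hom X Z;
  compA : forall (X Y Z W : Obj) (h : Hom Z W) (g : Hom Y Z) (f : Hom X Y),
      compo h (compo g f) = compo (compo h g) f;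
  comp1m : forall (X Y : Obj) (f : Hom X Y), compo (idm Y) f = f;
  compm1 : forall (X Y : Obj) (f : Hom X Y), compo f (idm X) = f;
  compDl : forall (X Y Z : Obj) (g1 g2 : Hom Y Z) (f : Hom X Y),
      compo (g1 + g2) f = compo g1 f + compo g2 f;
  compDr : forall (X Y Z : Obj) (g : Hom Y Z) (f1 f2 : Hom X Y),
      compo g (f1 + f2) = compo g f1 + compo g f2
}.
Arguments Hom {p}.
Arguments idm {p}.
Arguments compo {p X Y Z}.

Section Basic.
Variable C : PreaddCat.

Definition is_iso (X Y : C) (f : Hom X Y) : Prop :=
  exists g : Hom Y X, compo g f = idm X /\ compo f g = idm Y.

Definition isomorphic (X Y : C) : Prop := exists f : Hom X Y, is_iso f.

Definition is_zero (X : C) : Prop := idm X = 0.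

Definition is_biproduct (X Y B : C) (i1 : Hom X B) (i2 : Hom Y B)
  (p1 : Hom B X) (p2 : Hom B Y) : Prop :=
  [/\ compo p1 i1 = idm X, compo p2 i2 = idm Y, compo p1 i2 = 0, compo p2 i1 = 0
    & compo i1 p1 + compo i2 p2 = idm B].

Definition additive_cat : Prop :=
  (exists Z : C, is_zero Z) /\
  (forall X Y : C, exists (B : C) (i1 : Hom X B) (i2 : Hom Y B)
     (p1 : Hom B X) (p2 : Hom B Y), is_biproduct i1 i2 p1 p2).

(* Subcategories: full, additive, closed under isomorphisms and direct
   summands; represented by predicates on objects. *)
Definition subcategory (P : C -> Prop) : Prop :=
  [/\ (forall X Y : C, isomorphic X Y -> P X -> P Y),
      (exists Z : C, is_zero Z /\ P Z),
      (forall (X Y B : C) i1 i2 p1 p2, @is_biproduct X Y B i1 i2 p1 p2 ->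
          P X -> P Y -> P B)
    & (forall (X Y B : C) i1 i2 p1 p2, @is_biproduct X Y B i1 i2 p1 p2 ->
          P B -> P X)].

Definition factors_through (P : C -> Prop) (X Y : C) (f : Hom X Y) : Prop :=
  exists (W : C) (g : Hom X W) (h : Hom W Y), P W /\ f = compo h g.

End Basic.

Record TriData (C : PreaddCat) := MkTriData {
  sh : C -> C;
  shm : forall X Y : C, Hom X Y -> Hom (sh X) (sh Y);
  dist : forall X Y Z : C, Hom X Y -> Hom Y Z -> Hom Z (sh X) -> Prop
}.
Arguments sh {C}.
Arguments shm {C} t {X Y}.
Arguments dist {C} t {X Y Z}.

Section Tri.
Variables (C : PreaddCat) (t : TriData C).

Definition triangulated : Prop :=
  additive_cat C /\
  (forall X : C, shm t (idm X) = idm (sh t X)) /\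
  (forall (X Y Z : C) (g : Hom Y Z) (f : Hom X Y),
      shm t (compo g f) = compo (shm t g) (shm t f)) /\
  (forall (X Y : C) (f g : Hom X Y), shm t (f + g) = shm t f + shm t g) /\
  (forall (X Y : C), bijective (@shm C t X Y)) /\
  (forall Y : C, exists X : C, isomorphic (sh t X) Y) /\
  (forall (X Y Z X' Y' Z' : C) (f : Hom X Y) (g : Hom Y Z) (h : Hom Z (sh t X))
      (f' : Hom X' Y') (g' : Hom Y' Z') (h' : Hom Z' (sh t X'))
      (u : Hom X X') (v : Hom Y Y') (w : Hom Z Z'),
      is_iso u -> is_iso v -> is_iso w ->
      compo f' u = compo v f -> compo g' v = compo w g ->
      compo h' w = compo (shm t u) h ->
      dist t f g h -> dist t f' g' h') /\
  (forall (X Z : C), is_zero Z ->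
      dist t (idm X) (0 : Hom X Z) (0 : Hom Z (sh t X))) /\
  (forall (X Y : C) (f : Hom X Y), exists (Z : C) (g : Hom Y Z)
      (h : Hom Z (sh t X)), dist t f g h) /\
  (forall (X Y Z : C) (f : Hom X Y) (g : Hom Y Z) (h : Hom Z (sh t X)),
      dist t f g h <-> dist t g h (- shm t f)) /\
  (forall (X Y Z X' Y' Z' : C) (f : Hom X Y) (g : Hom Y Z) (h : Hom Z (sh t X))
      (f' : Hom X' Y') (g' : Hom Y' Z') (h' : Hom Z' (sh t X'))
      (u : Hom X X') (v : Hom Y Y'),
      dist t f g h -> dist t f' g' h' -> compo f' u = compo v f ->
      exists w : Hom Z Z', compo g' v = compo w g /\
                           compo h' w = compo (shm t u) h) /\
  (forall (X Y Z Z' Y' X' : C) (f : Hom X Y) (g : Hom Y Z)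
      (p1 : Hom Y Z') (q1 : Hom Z' (sh t X))
      (p2 : Hom Z Y') (q2 : Hom Y' (sh t X))
      (p3 : Hom Z X') (q3 : Hom X' (sh t Y)),
      dist t f p1 q1 -> dist t (compo g f) p2 q2 -> dist t g p3 q3 ->
      exists (u : Hom Z' Y') (v : Hom Y' X'),
        [/\ dist t u v (compo (shm t p1) q3),
            compo u p1 = compo p2 g, compo q2 u = q1,
            compo v p2 = p3 & compo q3 v = compo (shm t f) q2]).

Definition Ext1_vanish (P Q : C -> Prop) : Prop :=
  forall (X Y : C), P X -> Q Y -> forall f : Hom X (sh t Y), f = 0.

Definition cotorsion_pair (U V : C -> Prop) : Prop :=
  Ext1_vanish U V /\
  forall X : C, exists (M N : C) (f : Hom M X) (g : Hom X (sh t N))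
    (h : Hom (sh t N) (sh t M)), [/\ U M, V N & dist t f g h].

Definition twin_cotorsion_pair (S T U V : C -> Prop) : Prop :=
  [/\ cotorsion_pair S T, cotorsion_pair U V & Ext1_vanish S V].

Definition Wcore (T U : C -> Prop) : C -> Prop := fun X => T X /\ U X.

(* C^- = S[-1] * W : objects X with a triangle M -> X -> N -> M[1],
   M[1] in S and N in W *)
Definition Cminus (S W : C -> Prop) : C -> Prop := fun X =>
  exists (M N : C) (f : Hom M X) (g : Hom X N) (h : Hom N (sh t M)),
    [/\ S (sh t M), W N & dist t f g h].

(* tau : objects -> objects with counit eps : tau C -> C is a right adjoint
   of the inclusion of the ideal quotient C^-/[W] into C/[W]:
   tau C lies in C^- and for every X in C^-, composition with eps induces a
   bijection  (C/[W])(X, tau C) -> (C/[W])(X, C). *)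
Definition quot_right_adjoint (W Cm : C -> Prop) (tau : C -> C)
  (eps : forall X : C, Hom (tau X) X) : Prop :=
  forall Y : C, Cm (tau Y) /\
    forall X : C, Cm X ->
      (forall f : Hom X Y, exists g : Hom X (tau Y),
          factors_through W (f - compo (eps Y) g)) /\
      (forall g1 g2 : Hom X (tau Y),
          factors_through W (compo (eps Y) g1 - compo (eps Y) g2) ->
          factors_through W (g1 - g2)).

(* X is a zero object of the ideal quotient by [W] *)
Definition quot_zero (W : C -> Prop) (X : C) : Prop :=
  factors_through W (idm X).

End Tri.

(* Main.v *)
From Pilot Require Import Defs.
From mathcomp Require Import all_boot ssralg.

Set Implicit Arguments.
Unset Strict Implicit.
Unset Printing Implicit Defensive.
Import GRing.Theory.
Local Open Scope ring_scope.

Definition cA := Pilot.Defs.compA.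

Lemma double0 (V : zmodType) (x : V) : x = x + x -> x = 0.
Proof. by move=> H; have := subrr x; rewrite {1}H addrK. Qed.

Lemma comp0l (C : PreaddCat) (X Y Z : C) (f : Hom X Y) :
  compo (0 : Hom Y Z) f = 0.
Proof. by apply: double0; rewrite -compDl addr0. Qed.

Lemma comp0r (C : PreaddCat) (X Y Z : C) (g : Hom Y Z) :
  compo g (0 : Hom X Y) = 0.
Proof. by apply: double0; rewrite -compDr addr0. Qed.

Lemma compNl (C : PreaddCat) (X Y Z : C) (g : Hom Y Z) (f : Hom X Y) :
  compo (- g) f = - compo g f.
Proof. by apply/eqP; rewrite -addr_eq0 -compDl addNr comp0l. Qed.

Lemma compNr (C : PreaddCat) (X Y Z : C) (g : Hom Y Z) (f : Hom X Y) :
  compo g (- f) = - compo g f.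
Proof. by apply/eqP; rewrite -addr_eq0 -compDr addNr comp0r. Qed.

Lemma compBl (C : PreaddCat) (X Y Z : C) (g1 g2 : Hom Y Z) (f : Hom X Y) :
  compo (g1 - g2) f = compo g1 f - compo g2 f.
Proof. by rewrite compDl compNl. Qed.

Lemma compBr (C : PreaddCat) (X Y Z : C) (g : Hom Y Z) (f1 f2 : Hom X Y) :
  compo g (f1 - f2) = compo g f1 - compo g f2.
Proof. by rewrite compDr compNr. Qed.

Section T.
End T.

Lemma zero_obj (C : PreaddCat) (t : TriData C) (Htri : triangulated t) :
  exists Z : C, is_zero Z.
Proof. by case: Htri => [[H _] _]. Qed.

Lemma shm0 (C : PreaddCat) (t : TriData C) (Htri : triangulated t) (X Y : C) :
  shm t (0 : Hom X Y) = 0.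
Proof.
case: Htri => _ [_ [_ [HshD _]]].
by apply: double0; rewrite -HshD addr0.
Qed.

Lemma sh_zero (C : PreaddCat) (t : TriData C) (Htri : triangulated t) (Z : C) :
  is_zero Z -> is_zero (sh t Z).
Proof.
move=> HZ; rewrite /is_zero.
have [_ [Hsh1 _]] := Htri.
by rewrite -Hsh1 HZ (shm0 Htri).
Qed.

Lemma shm_inj (C : PreaddCat) (t : TriData C) (Htri : triangulated t) (X Y : C)
  (f g : Hom X Y) : shm t f = shm t g -> f = g.
Proof.
case: Htri => _ [_ [_ [_ [Hbij _]]]].
exact: (bij_inj (Hbij X Y)).
Qed.

Lemma shm_surj (C : PreaddCat) (t : TriData C) (Htri : triangulated t) (X Y : C)
  (f : Hom (sh t X) (sh t Y)) : exists g : Hom X Y, f = shm t g.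
Proof.
case: Htri => _ [_ [_ [_ [Hbij _]]]].
case: (Hbij X Y) => inv _ Hr.
by exists (inv f); rewrite Hr.
Qed.

Lemma dist_rot (C : PreaddCat) (t : TriData C) (Htri : triangulated t)
  (A B D : C) (f : Hom A B) (g : Hom B D) (h : Hom D (sh t A)) :
  dist t f g h -> dist t g h (- shm t f).
Proof.
case: Htri => _ [_ [_ [_ [_ [_ [_ [_ [_ [HTR2 _]]]]]]]]].
by move/(HTR2 _ _ _ f g h).
Qed.

Lemma comp_dist0 (C : PreaddCat) (t : TriData C) (Htri : triangulated t)
  (A B D : C) (f : Hom A B) (g : Hom B D) (h : Hom D (sh t A)) :
  dist t f g h -> compo g f = 0.
Proof.
have [Z0 HZ0] := zero_obj Htri.
case: Htri => _ [_ [_ [_ [_ [_ [_ [HTR1 [_ [HTR2 [HTR3 _]]]]]]]]]].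
move=> Hd.
have Hd0 := HTR1 A Z0 HZ0.
have [w [Hw _]] := HTR3 _ _ _ _ _ _ _ _ _ _ _ _ (idm A) f Hd0 Hd erefl.
by rewrite Hw comp0r.
Qed.

Lemma left_exact (C : PreaddCat) (t : TriData C) (Htri : triangulated t)
  (A B D Y : C) (f : Hom A B) (g : Hom B D) (h : Hom D (sh t A)) (phi : Hom B Y) :
  dist t f g h -> compo phi f = 0 -> exists w : Hom D Y, phi = compo w g.
Proof.
have [Z0 HZ0] := zero_obj Htri.
have Hsz := sh_zero Htri HZ0.
have Hs0 := @shm0 _ _ Htri Z0 Y.
case: Htri => _ [_ [_ [_ [_ [_ [_ [HTR1 [_ [HTR2 [HTR3 _]]]]]]]]]].
move=> Hd Hf.
have Hd0 : dist t (0 : Hom Z0 Y) (idm Y) (0 : Hom Y (sh t Z0)).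
  apply: (proj2 (HTR2 _ _ _ _ _ _)).
  rewrite Hs0 oppr0; exact: HTR1.
have Hc : compo (0 : Hom Z0 Y) (0 : Hom A Z0) = compo phi f by rewrite comp0l Hf.
have [w [Hw _]] := HTR3 _ _ _ _ _ _ f g h _ _ _ (0 : Hom A Z0) phi Hd Hd0 Hc.
by exists w; rewrite -Hw comp1m.
Qed.

Lemma right_exact (C : PreaddCat) (t : TriData C) (Htri : triangulated t)
  (A B D Y : C) (f : Hom A B) (g : Hom B D) (h : Hom D (sh t A)) (psi : Hom Y B) :
  dist t f g h -> compo g psi = 0 -> exists w : Hom Y A, psi = compo f w.
Proof.
have [Z0 HZ0] := zero_obj Htri.
have Hinj := shm_inj Htri.
have Hsurj := shm_surj Htri.
have Hrot := dist_rot Htri.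
case: Htri => _ [Hsh1 [HshC [_ [_ [_ [_ [HTR1 [_ [HTR2 [HTR3 _]]]]]]]]]].
move=> Hd Hg.
have Hd0 : dist t (0 : Hom Y Z0) (0 : Hom Z0 (sh t Y)) (- shm t (idm Y)).
  apply: (proj1 (HTR2 _ _ _ _ _ _)); exact: HTR1.
have Hc : compo g psi = compo (0 : Hom Z0 D) (0 : Hom Y Z0) by rewrite Hg comp0l.
have [w [_ Hw]] := HTR3 _ _ _ _ _ _ _ _ _ _ _ _ psi (0 : Hom Z0 D) Hd0 (Hrot _ _ _ _ _ _ Hd) Hc.
move: Hw; rewrite compNl compNr Hsh1 compm1 => /oppr_inj Hw.
have [w0 Hw0] := Hsurj _ _ w.
exists w0; apply: Hinj; by rewrite HshC -Hw0 Hw.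
Qed.

Lemma unshift (C : PreaddCat) (t : TriData C) (Htri : triangulated t)
  (A B : C) (i : Hom (sh t A) (sh t B)) (r : Hom (sh t B) (sh t A)) :
  compo r i = idm _ -> exists (i' : Hom A B) (r' : Hom B A), compo r' i' = idm A.
Proof.
have Hinj := shm_inj Htri.
have [i' ->] := shm_surj Htri i.
have [r' ->] := shm_surj Htri r.
case: Htri => _ [Hsh1 [HshC _]].
move=> H; exists i', r'; apply: Hinj; by rewrite HshC H Hsh1.
Qed.

Lemma split_biprod (C : PreaddCat) (t : TriData C) (Htri : triangulated t)
  (X B : C) (a : Hom X B) (r : Hom B X) :
  compo r a = idm X ->
  exists (D : C) (i2 : Hom D B) (p2 : Hom B D), is_biproduct a i2 r p2.
Proof.
move=> Hra.
have Hrot := dist_rot Htri.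
have Hc0 := comp_dist0 Htri.
have Hle := left_exact Htri.
have Hre := right_exact Htri.
case: (Htri) => _ [Hsh1 [HshC [_ [_ [_ [_ [_ [HTR1ex _]]]]]]]].
have [D [g [h Hd]]] := HTR1ex _ _ a.
have Hh : h = 0.
  have := Hc0 _ _ _ _ _ _ (Hrot _ _ _ _ _ _ (Hrot _ _ _ _ _ _ Hd)).
  rewrite compNl => /eqP; rewrite oppr_eq0 => /eqP H.
  by rewrite -[h]comp1m -Hsh1 -Hra HshC -cA H comp0r.
have Hga := Hc0 _ _ _ _ _ _ Hd.
have Hc : compo h (idm D) = 0 by rewrite Hh comp0l.
have [s Hs] := Hre _ _ _ _ _ _ _ (idm D) (Hrot _ _ _ _ _ _ Hd) Hc.
set s' := s - compo a (compo r s).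
have Hrs' : compo r s' = 0.
  by rewrite /s' compBr cA Hra comp1m subrr.
have Hgs' : compo g s' = idm D.
  by rewrite /s' compBr cA Hga comp0l subr0 Hs.
clearbody s'.
exists D, s', g; split => //.
set e := idm B - compo a r - compo s' g.
have Hea : compo e a = 0.
  by rewrite /e !compBl comp1m -cA Hra compm1 -cA Hga comp0r subrr subr0.
have [e' He'] := Hle _ _ _ _ _ _ _ e Hd Hea.
have Hes : compo e s' = 0.
  by rewrite /e !compBl comp1m -cA Hrs' comp0r subr0 -cA Hgs' compm1 subrr.
have He0 : e' = 0.
  by rewrite -[e']compm1 -Hgs' cA -He' Hes.
move: He'; rewrite He0 comp0l /e => /eqP.
by rewrite subr_eq0 subr_eq => /eqP ->; rewrite addrC.
Qed.

Lemma summand (C : PreaddCat) (t : TriData C) (Htri : triangulated t)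
  (P : C -> Prop) (HP : subcategory P) (X B : C) (a : Hom X B) (r : Hom B X) :
  compo r a = idm X -> P B -> P X.
Proof.
move=> Hra HB.
have [D [i2 [p2 Hb]]] := split_biprod Htri Hra.
case: HP => _ _ _ Hs.
exact: Hs _ _ _ _ _ _ _ Hb HB.
Qed.

Lemma genzero (C : PreaddCat) (t : TriData C) (Htri : triangulated t)
  (P Q : C -> Prop) (HPQ : Ext1_vanish t P Q) (M Y : C) (phi : Hom M Y) :
  P (sh t M) -> Q Y -> phi = 0.
Proof.
move=> HM HY; apply: (shm_inj Htri).
by rewrite (shm0 Htri) (HPQ _ _ HM HY (shm t phi)).
Qed.

Lemma T_char (C : PreaddCat) (t : TriData C) (Htri : triangulated t)
  (cS cT : C -> Prop) (HT : subcategory cT) (Hct : cotorsion_pair t cS cT) (Y : C) :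
  (forall M : C, cS M -> forall phi : Hom M (sh t Y), phi = 0) -> cT Y.
Proof.
move=> H; case: Hct => _ Hdec.
have [M [N [f [g [h [HM HN Hd]]]]]] := Hdec (sh t Y).
have Hc : compo (idm (sh t Y)) f = 0 by rewrite (H M HM f) comp0r.
have [w Hw] := left_exact Htri Hd Hc.
have [i' [r' Hri]] := unshift Htri (esym Hw).
exact: (summand Htri HT Hri HN).
Qed.

Theorem lemma3p10 (C : PreaddCat) (t : TriData C) (Htri : triangulated t)
  (cS cT cU cV : C -> Prop)
  (HS : subcategory cS) (HT : subcategory cT)
  (HU : subcategory cU) (HV : subcategory cV)
  (Htwin : twin_cotorsion_pair t cS cT cU cV)
  (tau : C -> C) (eps : forall X : C, Hom (tau X) X)
  (Htau : @quot_right_adjoint C (Wcore cT cU)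
            (Cminus t cS (Wcore cT cU)) tau eps)
  (X : C)
  (S' T0 : C) (f1 : Hom S' X) (a : Hom X T0) (h1 : Hom T0 (sh t S'))
  (HS' : cS (sh t S')) (HT0 : cT T0) (Hd1 : dist t f1 a h1)
  (U0 V0 : C) (f2 : Hom U0 T0) (b : Hom T0 (sh t V0)) (h2 : Hom (sh t V0) (sh t U0))
  (HU0 : cU U0) (HV0 : cV V0) (Hd2 : dist t f2 b h2)
  (K : C) (f3 : Hom V0 K) (k : Hom K X)
  (Hd3 : dist t f3 k (compo b a)) :
  (quot_zero (Wcore cT cU) (tau X) <-> Wcore cT cU K) /\
  (Wcore cT cU K <-> cT X).
Proof.
have Hrot := dist_rot Htri.
have Hc0 := comp_dist0 Htri.
case: Htwin => [[HextST HdecST] [HextUV HdecUV] HextSV].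
have HZ : forall (M Y : C) (phi : Hom M Y), cS (sh t M) -> cT Y -> phi = 0.
  by move=> M Y phi; apply: (genzero Htri HextST).
have E3 : f1 = 0 <-> cT X.
  split; last by move=> HX; apply: HZ.
  move=> Hf1.
  have Hc : compo (idm X) f1 = 0 by rewrite Hf1 comp0r.
  have [w Hw] := left_exact Htri Hd1 Hc.
  exact: (summand Htri HT (esym Hw) HT0).
have [Z0 [HZ0 HWZ0]] : exists Z0 : C, is_zero Z0 /\ Wcore cT cU Z0.
  case: HT => _ [ZT [HZT HcZT]] _ _.
  case: HU => HisoU [ZU [HZU HcZU]] _ _.
  exists ZT; split => //; split => //.
  apply: (HisoU ZU ZT) HcZU.
  exists 0, 0; split.
    by rewrite comp0l HZU.
  by rewrite comp0l HZT.
have E1a : quot_zero (Wcore cT cU) (tau X) -> f1 = 0.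
  move=> [W1 [g1 [h1' [[HW1 _] Hid]]]].
  have HCm : Cminus t cS (Wcore cT cU) S'.
    exists S', Z0, (idm S'), 0, 0; split => //.
    case: Htri => _ [_ [_ [_ [_ [_ [_ [HTR1 _]]]]]]]; exact: HTR1.
  have [_ Hadj] := Htau X.
  have [Hsur _] := Hadj S' HCm; have [g [W2 [g2 [h2' [[HW2 _] Hfg]]]]] := Hsur f1.
  rewrite (HZ _ _ g2 HS' HW2) comp0r in Hfg.
  move/eqP: Hfg; rewrite subr_eq0 => /eqP ->.
  by rewrite -[g]comp1m Hid -cA (HZ _ _ (compo g1 g) HS' HW1) !comp0r.
have E1b : f1 = 0 -> quot_zero (Wcore cT cU) (tau X).
  move/E3 => HX.
  have [HCm Hadj] := Htau X.
  have HCm' := HCm.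
  case: HCm => [M [N [f [g [h [HM HN Hd]]]]]].
  have [w Hw] := left_exact Htri Hd (HZ _ _ (compo (eps X) f) HM HX).
  have [_ Hinj] := Hadj _ HCm'.
  have := Hinj (idm _) 0.
  rewrite compm1 comp0r !subr0 /quot_zero; apply.
  by exists N, g, w.
have E2a : Wcore cT cU K -> f1 = 0.
  move=> [HK _].
  have Haf := Hc0 _ _ _ _ _ _ Hd1.
  have Hc : compo (compo b a) f1 = 0 by rewrite -cA Haf comp0r.
  have [s ->] := right_exact Htri (Hrot _ _ _ _ _ _ Hd3) Hc.
  by rewrite (HZ _ _ s HS' HK) comp0r.
have E2b : f1 = 0 -> Wcore cT cU K.
  move=> Hf1.
  have D1 := Hrot _ _ _ _ _ _ Hd1.
  have D2 := Hrot _ _ _ _ _ _ (Hrot _ _ _ _ _ _ Hd3).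
  have D3 := Hrot _ _ _ _ _ _ Hd2.
  have [u [v [Huv _ Hq _ _]]] :
    exists (u : Hom (sh t S') (sh t K)) (v : Hom (sh t K) (sh t U0)),
      [/\ dist t u v (compo (shm t h1) (- shm t f2)),
          compo u h1 = compo (- shm t f3) b, compo (- shm t k) u = - shm t f1,
          compo v (- shm t f3) = h2 & compo (- shm t f2) v = compo (shm t a) (- shm t k)].
    case: Htri => _ [_ [_ [_ [_ [_ [_ [_ [_ [_ [_ HTR4]]]]]]]]]].
    exact: HTR4 D1 D2 D3.
  rewrite Hf1 (shm0 Htri) oppr0 in Hq.
  have [w Hw] := right_exact Htri (Hrot _ _ _ _ _ _ D2) Hq.
  rewrite (HextSV _ _ HS' HV0 w) comp0r in Hw.
  have Hc : compo (idm (sh t K)) u = 0 by rewrite Hw comp0r.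
  have [w' Hw'] := left_exact Htri Huv Hc.
  have [i' [r' Hri]] := unshift Htri (esym Hw').
  have HTU0 : cT U0.
    apply: (T_char Htri HT (conj HextST HdecST)) => M HM phi.
    have Hc' : compo (- shm t f2) phi = 0 by apply: HextST.
    have [w2 ->] := right_exact Htri (Hrot _ _ _ _ _ _ D3) Hc'.
    by rewrite (HextSV _ _ HM HV0 w2) comp0r.
  split.
    exact: (summand Htri HT Hri HTU0).
  exact: (summand Htri HU Hri HU0).
split; split.
- by move=> H; apply/E2b/E1a.
- by move=> H; apply/E1b/E2a.
- by move=> H; apply/E3/E2a.
- by move=> H; apply/E2b/E3.
Qed.
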